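(* Let $E(\lambda,\eta,\xi)$ be analytic in a neighborhood of $0\in\mathbb{C}^3$ with Taylor coefficients $a_{(i,j,k)}\in(\sqrt{-1})^{j+k}\mathbb{R}$, such that $E(\lambda,-\eta,\xi)=E(\lambda,\eta,\xi)$, $E(0,0,\xi)\equiv0$, $a_{(1,0,0)}=0$, $a_{(2,0,0)}\ne0$, $a_{(0,2,0)}\ne0$. Write near the origin $E=Wh$ with $h(0,0,0)\ne0$ and $W(\lambda;\eta,\xi)=\lambda^2+b(\eta,\xi)\lambda+c(\eta,\xi)$, $b=b_{01}\xi+b_{02}\xi^2+b_{20}\eta^2+O(|\eta|+|\xi|)^3$, $c=\eta^2(c_{20}+c_{21}\xi+O(|\eta|+|\xi|)^2)$, and assume $c_{20}>0$. Define ${\rm ind}_1=b_{02}$, ${\rm ind}_2=b_{20}$, ${\rm ind}_3=c_{21}^2(b_{01}^2b_{20}^2-2b_{01}b_{20}c_{21}+4b_{02}b_{20}c_{20}+c_{21}^2)$, ${\rm ind}_4=-b_{01}b_{20}c_{21}+2b_{02}b_{20}c_{20}+c_{21}^2$, ${\rm ind}_5=-b_{01}c_{21}+b_{02}c_{20}$. Suppose one of: (i) ${\rm ind}_1<0$ or ${\rm ind}_2<0$; (ii) ${\rm ind}_1>0$, ${\rm ind}_2>0$, ${\rm ind}_3>0$ and ${\rm ind}_4\le0$; (iii) ${\rm ind}_1>0$, ${\rm ind}_2>0$, ${\rm ind}_3>0$ and ${\rm ind}_5<0$. Then for every $r>0$ there exist real $(\eta,\xi)$ with $0<|\eta|+|\xi|<r$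 and a root $\lambda$ of $W(\cdot;\eta,\xi)$ (a zero of $E(\cdot,\eta,\xi)$ near $0$) with $\Re\lambda>0$.
   Context: In the paper, $E$ is the periodic Evans–Lopatinsky determinant of a planar roll wave of the inviscid Saint-Venant equations, and the conclusion is low-frequency spectral instability. Under the hypotheses, $b_{02},b_{20},c_{20}\in\mathbb{R}$ and $b_{01},c_{21}\in i\mathbb{R}$, so the indices are real. *)

(* Defs.v *)
From HB Require Import structures.
From mathcomp Require Import all_boot all_order all_algebra.
From mathcomp Require Import reals.
From mathcomp Require Import complex.
Set Implicit Arguments. Unset Strict Implicit. Unset Printing Implicit Defensive.
Import Order.TTheory GRing.Theory Num.Theory.
Local Open Scope ring_scope.

Definition iC (R : realType) : R[i] := Complex 0 1.

Definition cvgC (R : realType) (s : nat -> R[i]) (l : R[i]) : Prop :=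
  forall e : R[i], 0 < e -> exists N : nat, forall n : nat, (N <= n)%N -> `|s n - l| < e.

Definition ps3 (R : realType) (a : nat -> nat -> nat -> R[i]) (N : nat) (x y z : R[i]) : R[i] :=
  \sum_(i < N) \sum_(j < N) \sum_(k < N) a i j k * x ^+ i * y ^+ j * z ^+ k.
Definition abs3 (R : realType) (a : nat -> nat -> nat -> R[i]) (N : nat) (x y z : R[i]) : R[i] :=
  \sum_(i < N) \sum_(j < N) \sum_(k < N) `|a i j k| * `|x| ^+ i * `|y| ^+ j * `|z| ^+ k.

(* f is analytic on the polydisc of radius rho around 0 in C^3, with Taylor
   coefficients a: the power series converges absolutely there and sums to f *)
Definition has_ps3 (R : realType) (a : nat -> nat -> nat -> R[i])
  (f : R[i] -> R[i] -> R[i] -> R[i]) (rho : R[i]) : Prop :=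
  0 < rho /\
  forall x y z : R[i], `|x| < rho -> `|y| < rho -> `|z| < rho ->
    (exists M : R[i], forall N : nat, abs3 a N x y z <= M) /\
    cvgC (fun N => ps3 a N x y z) (f x y z).

Definition ps2 (R : realType) (a : nat -> nat -> R[i]) (N : nat) (x y : R[i]) : R[i] :=
  \sum_(j < N) \sum_(k < N) a j k * x ^+ j * y ^+ k.
Definition abs2 (R : realType) (a : nat -> nat -> R[i]) (N : nat) (x y : R[i]) : R[i] :=
  \sum_(j < N) \sum_(k < N) `|a j k| * `|x| ^+ j * `|y| ^+ k.
Definition has_ps2 (R : realType) (a : nat -> nat -> R[i])
  (f : R[i] -> R[i] -> R[i]) (rho : R[i]) : Prop :=
  0 < rho /\
  forall x y : R[i], `|x| < rho -> `|y| < rho ->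
    (exists M : R[i], forall N : nat, abs2 a N x y <= M) /\
    cvgC (fun N => ps2 a N x y) (f x y).

Definition Wpoly (R : realType) (b c : R[i] -> R[i] -> R[i]) (l eta xi : R[i]) : R[i] :=
  l ^+ 2 + b eta xi * l + c eta xi.

Definition ind1 (R : realType) (b01 b02 b20 c20 c21 : R[i]) : R[i] := b02.
Definition ind2 (R : realType) (b01 b02 b20 c20 c21 : R[i]) : R[i] := b20.
Definition ind3 (R : realType) (b01 b02 b20 c20 c21 : R[i]) : R[i] :=
  c21 ^+ 2 * (b01 ^+ 2 * b20 ^+ 2 - 2 * b01 * b20 * c21 + 4 * b02 * b20 * c20 + c21 ^+ 2).
Definition ind4 (R : realType) (b01 b02 b20 c20 c21 : R[i]) : R[i] :=
  - b01 * b20 * c21 + 2 * b02 * b20 * c20 + c21 ^+ 2.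
Definition ind5 (R : realType) (b01 b02 b20 c20 c21 : R[i]) : R[i] :=
  - b01 * c21 + b02 * c20.

(* Main.v *)
Require Import Defs.
From HB Require Import structures.
From mathcomp Require Import all_boot all_order all_algebra.
From mathcomp Require Import reals.
From mathcomp Require Import complex.
From mathcomp Require Import ring lra.
Import Order.TTheory GRing.Theory Num.Theory.
Local Open Scope ring_scope.
Local Open Scope complex_scope.
Section L0.
Variable R : realType.

Definition Qf (br bi cr ci : R) := br^+2* cr + br* bi* ci - ci^+2.

Lemma root_quad (b c l : R[i]) : (2* l + b)^+2 = b^+2 - 4* c -> l^+2 + b* l + c = 0.
Proof.
move=> H.
have H4 : (4 : R[i]) != 0 by rewrite pnatr_eq0.
have : 4 * (l^+2 + b* l + c) = 0.
  have -> : 4 * (l^+2 + b* l + c) = (2* l + b)^+2 - (b^+2 - 4* c) by ring.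
  by rewrite H subrr.
by move/eqP; rewrite mulf_eq0 (negbTE H4) /= => /eqP.
Qed.

Lemma instab (b c : R[i]) : (complex.Re b < 0 \/ Qf (complex.Re b) (complex.Im b) (complex.Re c) (complex.Im c) < 0) ->
  exists l, l^+2 + b* l + c = 0 /\ 0 < complex.Re l.
Proof.
move=> H.
set d := sqrtc (b^+2 - 4* c).
have Hd : d^+2 = b^+2 - 4* c by rewrite sqr_sqrtc.
have H2 : (2 : R[i]) != 0 by rewrite pnatr_eq0.
set l1 := (-b + d)/2; set l2 := (-b - d)/2.
have e1 : 2* l1 = -b + d by rewrite /l1 mulrC divfK.
have e2 : 2* l2 = -b - d by rewrite /l2 mulrC divfK.
have r1 : l1^+2 + b* l1 + c = 0 by apply: root_quad; rewrite e1 -Hd; congr (_ ^+ 2); ring.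
have r2 : l2^+2 + b* l2 + c = 0 by apply: root_quad; rewrite e2; rewrite -Hd; ring.
have hb : b = -(l1 + l2).
  apply: (mulfI H2); rewrite mulrN mulrDr e1 e2; ring.
have hc : c = l1 * l2.
  have H4 : (4 : R[i]) != 0 by rewrite pnatr_eq0.
  apply: (mulfI H4).
  have -> : 4 * (l1 * l2) = (2* l1)*(2* l2) by ring.
  rewrite e1 e2.
  have -> : (-b + d) * (-b - d) = b^+2 - d^+2 by ring.
  rewrite Hd; ring.
case: (ltrP 0 (complex.Re l1)) => h1; first by exists l1.
case: (ltrP 0 (complex.Re l2)) => h2; first by exists l2.
exfalso.
move: H h1 h2; rewrite hb hc.
case: l1 {e1 r1 hb hc} => x1 y1; case: l2 {e2 r2} => x2 y2 /=.
rewrite /Qf /=.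
move=> H h1 h2; clear Hd H2 d.
have hq : (- (x1 + x2))^+2 * (x1 * x2 - y1 * y2) + (- (x1 + x2)) * (- (y1 + y2)) * (x1 * y2 + y1 * x2) - (x1 * y2 + y1 * x2)^+2
   = x1 * x2 * ((x1+x2)^+2 + (y1 - y2)^+2) by ring.
case: H => H.
  lra.
have : 0 <= x1 * x2 * ((x1+x2)^+2 + (y1 - y2)^+2).
  apply: mulr_ge0; first by nra.
  by apply: addr_ge0; apply: sqr_ge0.
lra.
Qed.
End L0.
Section Tail.
Variable R : realType.
Local Notation C := R[i].

Lemma geom2 (N : nat) : \sum_(j < N) ((2:C)^-1)^+j <= 2.
Proof.
have H2 : (2:C) != 0 by rewrite pnatr_eq0.
have E : forall N, \sum_(j < N) ((2:C)^-1)^+j + 2 * ((2:C)^-1)^+N = 2.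
  elim=> [|n IH]; first by rewrite big_ord0 add0r expr0 mulr1.
  rewrite big_ord_recr /= -addrA exprS mulrA mulfV // mul1r.
  by rewrite -[RHS]IH mulr_natl mulr2n.
rewrite -{2}(E N) lerDl; apply: mulr_ge0 => //; apply: exprn_ge0.
by rewrite invr_ge0.
Qed.

Lemma sum_widen2 (K N : nat) (G : nat -> nat -> C) : (K <= N)%N ->
  (forall j k, ~~ ((j < K) && (k < K))%N -> G j k = 0) ->
  \sum_(j < N) \sum_(k < N) G j k = \sum_(j < K) \sum_(k < K) G j k.
Proof.
move=> hKN H.
rewrite (big_ord_widen N (fun j => \sum_(k < K) G j k) hKN) [RHS]big_mkcond /=.
apply: eq_bigr => j _; case: ifP => hj.
  rewrite (big_ord_widen N (G j) hKN) [RHS]big_mkcond /=.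
  apply: eq_bigr => k _; case: ifP => hk //.
  by rewrite H // hj hk.
by apply: big1 => k _; apply: H; rewrite hj.
Qed.

Lemma coef_bound (a : nat -> nat -> C) f rho0 : has_ps2 a f rho0 ->
  exists M rho : C, 0 < rho /\ rho <= 1 /\ rho < rho0 /\ 0 <= M /\
    forall j k, `|a j k| * rho ^+ (j + k) <= M.
Proof.
case=> hr0 H.
set rho := rho0 / (2 + rho0).
have h2 : 0 < 2 + rho0 by apply: addr_gt0.
have hrp : 0 < rho by apply: divr_gt0.
have hr1 : rho <= 1.
  by rewrite /rho ler_pdivrMr // mul1r lerDr ler0n.
have hrr : rho < rho0.
  rewrite /rho ltr_pdivrMr // -{1}(mulr1 rho0) ltr_pM2l //.
  apply: (@lt_le_trans _ _ 2); first by rewrite ltr1n.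
  by rewrite lerDl ltW.
have hn : `|rho| = rho by rewrite ger0_norm // ltW.
have := H rho rho; rewrite hn => /(_ hrr hrr) [[M0 HM] _].
exists M0, rho; do 4 (split => //).
  apply: le_trans (HM 0%N); rewrite /abs2 big_ord0 //.
move=> j k.
apply: le_trans (HM (j + k).+1).
rewrite /abs2.
have hj : (j < (j + k).+1)%N by rewrite ltnS leq_addr.
have hk : (k < (j + k).+1)%N by rewrite ltnS leq_addl.
have nn : forall (F : 'I_(j+k).+1 -> C) i0, (forall i, 0 <= F i) -> F i0 <= \sum_i F i.
  move=> F i0 hF; rewrite (bigD1 i0) //= lerDl; apply: sumr_ge0 => i _; exact: hF.
apply: le_trans (nn _ (Ordinal hj) _); last first.
  move=> i; apply: sumr_ge0 => i' _.
  by apply: mulr_ge0; [apply: mulr_ge0|]; [|apply: exprn_ge0..].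
apply: le_trans (nn _ (Ordinal hk) _); last first.
  by move=> i; apply: mulr_ge0; [apply: mulr_ge0|]; [|apply: exprn_ge0..].
by rewrite /= hn exprD mulrA.
Qed.

Lemma ps2_tail (a : nat -> nat -> C) f rho0 : has_ps2 a f rho0 ->
  exists M rho : C, 0 < rho /\ rho <= 1 /\ 0 <= M /\
  forall (A t x y : C) (p q n K : nat) (S : nat -> nat -> bool),
    1 <= A -> 0 <= t -> 2 * A * t <= rho -> (0 < p)%N -> (0 < q)%N ->
    `|x| <= A * t ^+ p -> `|y| <= A * t ^+ q ->
    (forall j k, S j k -> (j < K)%N && (k < K)%N) ->
    (forall j k, ~~ S j k -> a j k != 0 -> (n <= p * j + q * k)%N) ->
    `|f x y - \sum_(j < K) \sum_(k < K) (if S j k then a j k * x ^+ j * y ^+ k else 0)|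
      <= 4 * M * (2 * A / rho) ^+ n * t ^+ n.
Proof.
move=> Hps.
have [M [rho [hr0 [hr1 [hrr [hM HaM]]]]]] := @coef_bound a f rho0 Hps.
case: Hps => _ Hps.
exists M, rho; do 3 (split => //).
move=> A t x y p q n K S hA ht hAt hp hq hx hy hSK hSn.
have hA0 : 0 < A by apply: lt_le_trans hA.
have hrn : rho != 0 by rewrite gt_eqF.
have hAt' : A * t <= rho / 2.
  by rewrite ler_pdivlMr ?ltr0n // mulrC mulrA.
have ht1 : t <= 1.
  apply: le_trans hr1; apply: le_trans hAt.
  apply: (@le_trans _ _ (A * t)); first exact: ler_peMl.
  rewrite -mulrA; apply: ler_peMl; first by rewrite mulr_ge0 // ltW.
  by rewrite ler1n.
have hxr : forall (z : C) (m : nat), (0 < m)%N -> `|z| <= A * t ^+ m -> `|z| < rho0.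
  move=> z m hm hz; apply: le_lt_trans hrr.
  apply: le_trans hz _; apply: le_trans hAt.
  have -> : 2 * A * t = A * t + A * t by rewrite -mulrA mulr_natl mulr2n.
  apply: ler_wpDl; first by rewrite mulr_ge0 // ltW.
  rewrite ler_pM2l //.
  by rewrite -{2}(expr1 t); apply: ler_wiXn2l.
have [_ Hcv] := Hps x y (hxr _ _ hp hx) (hxr _ _ hq hy).
set T := \sum_(j < K) \sum_(k < K) _.
set B := 4 * M * (2 * A / rho) ^+ n * t ^+ n.
set F := fun j k => a j k * x ^+ j * y ^+ k.
set h : C := 2^-1.
set u := A / rho.
have hu1 : 1 <= u by rewrite /u ler_pdivlMr // mul1r; apply: le_trans hA; apply: le_trans hr1 _.
have hu0 : 0 <= u by apply: le_trans hu1.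
have h0 : 0 <= h by rewrite /h invr_ge0.
have hw0 : 0 <= 2 * u * t by rewrite mulr_ge0 // mulr_ge0.
have hw1 : 2 * u * t <= 1.
  by rewrite /u mulrA mulrAC ler_pdivrMr // mul1r.
have htrm : forall j k, `|if S j k then 0 else F j k| <= M * (2 * u * t) ^+ n * (h ^+ j * h ^+ k).
  move=> j k.
  have hR : 0 <= M * (2 * u * t) ^+ n * (h ^+ j * h ^+ k).
    by rewrite !mulr_ge0 // exprn_ge0.
  case: (S j k) (hSn j k) => //=; first by rewrite normr0.
  move=> hS; case: (eqVneq (a j k) 0) => ha.
    by rewrite /F ha !mul0r normr0.
  have hm := hS isT ha; set m := (p * j + q * k)%N in hm.
  have hjk : (j + k <= m)%N by rewrite leq_add // leq_pmull.
  rewrite /F !normrM !normrX.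
  apply: (@le_trans _ _ (`|a j k| * (A * t ^+ p) ^+ j * (A * t ^+ q) ^+ k)).
    apply: ler_pM; rewrite ?mulr_ge0 ?exprn_ge0 ?normr_ge0 //; last first.
      by apply: lerXn2r; rewrite // nnegrE ?normr_ge0 // (le_trans (normr_ge0 y) hy).
    apply: ler_pM; rewrite ?exprn_ge0 ?normr_ge0 //.
    by apply: lerXn2r; rewrite // nnegrE ?normr_ge0 // (le_trans (normr_ge0 x) hx).
  have -> : `|a j k| * (A * t ^+ p) ^+ j * (A * t ^+ q) ^+ k
       = (`|a j k| * rho ^+ (j + k)) * (u ^+ (j + k) * t ^+ m).
    rewrite /m /u !exprMn -!exprM !exprD !exprVn.
    idtac.
    by field; rewrite ?mulf_neq0 ?expf_neq0.
  apply: (@le_trans _ _ (M * (u ^+ m * t ^+ m))).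
    apply: ler_pM; [by rewrite mulr_ge0 ?normr_ge0 ?exprn_ge0 // ltW | by rewrite mulr_ge0 ?exprn_ge0 | exact: HaM | ].
    apply: ler_wpM2r; [by rewrite exprn_ge0 | exact: ler_weXn2l].
  have -> : u ^+ m * t ^+ m = (2 * u * t) ^+ m * h ^+ m.
    by rewrite -!exprMn /h; congr (_ ^+ _); field.
  rewrite -[X in _ <= X]mulrA; apply: ler_wpM2l => //.
  rewrite -exprD.
  apply: ler_pM; rewrite ?exprn_ge0 //.
    exact: ler_wiXn2l.
  by apply: ler_wiXn2l => //; rewrite /h invf_le1 ?ltr0n ?ler1n.
have hclaim : forall N, (K <= N)%N -> `|ps2 a N x y - T| <= B.
  move=> N hKN.
  have -> : ps2 a N x y - T = \sum_(j < N) \sum_(k < N) (if S j k then 0 else F j k).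
    have e : ps2 a N x y = \sum_(j < N) \sum_(k < N) (if S j k then F j k else 0)
               + \sum_(j < N) \sum_(k < N) (if S j k then 0 else F j k).
      rewrite -big_split /=; apply: eq_bigr => j _; rewrite -big_split /=.
      by apply: eq_bigr => k _; case: (S j k); rewrite ?addr0 ?add0r.
    rewrite e (@sum_widen2 K N (fun j k => if S j k then F j k else 0) hKN); last first.
      move=> j k hjk; case hS: (S j k) => //.
      by move: (hSK j k hS); rewrite (negbTE hjk).
    by rewrite [T + _]addrC addrK.
  apply: le_trans (ler_norm_sum _ _ _) _.
  apply: (@le_trans _ _ (\sum_(j < N) \sum_(k < N) M * (2 * u * t) ^+ n * (h ^+ j * h ^+ k))).
    apply: ler_sum => j _; apply: le_trans (ler_norm_sum _ _ _) _.
    by apply: ler_sum => k _; exact: htrm.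
  set w := M * (2 * u * t) ^+ n.
  have hw : 0 <= w by rewrite mulr_ge0 // exprn_ge0.
  have e2 : \sum_(j < N) \sum_(k < N) w * (h ^+ j * h ^+ k)
       = w * ((\sum_(j < N) h ^+ j) * (\sum_(k < N) h ^+ k)).
    by rewrite big_distrlr mulr_sumr; apply: eq_bigr => j _; rewrite mulr_sumr.
  have eB : B = w * (2 * 2).
    have e3 : (2 * (A / rho) * t) ^+ n = (2 * A / rho) ^+ n * t ^+ n by rewrite exprMn mulrA.
    rewrite /B /w /u e3; clear e2 e3 htrm; clearbody h u; ring.
  rewrite e2 eB; apply: ler_wpM2l => //.
  apply: ler_pM; rewrite ?geom2 //; apply: sumr_ge0 => i _; exact: exprn_ge0.
apply/ler_addgt0Pr => e he.
have [N0 HN0] := Hcv e he.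
have h1 := HN0 (maxn N0 K) (leq_maxl _ _).
have h2 := hclaim (maxn N0 K) (leq_maxr _ _).
have -> : f x y - T = (f x y - ps2 a (maxn N0 K) x y) + (ps2 a (maxn N0 K) x y - T).
  by rewrite addrA subrK.
apply: le_trans (ler_normD _ _) _.
rewrite addrC; apply: lerD => //.
by rewrite distrC ltW.
Qed.

Lemma normC_real (r : R) : `|r%:C| = `|r|%:C.
Proof. by rewrite normc_def /= expr0n /= addr0 sqrtr_sqr. Qed.

Lemma ltc0R (k : R) : (0 < k%:C) = (0 < k).
Proof. by rewrite ltcE /= eqxx. Qed.
Lemma lec0R (k : R) : (0 <= k%:C) = (0 <= k).
Proof. by rewrite lecE /= eqxx. Qed.
Lemma lec1R (k : R) : (1 <= k%:C) = (1 <= k).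
Proof. by rewrite lecE /= eqxx. Qed.

Lemma real_of_ge0 (z : C) : 0 <= z -> z = (complex.Re z)%:C.
Proof. by case: z => x y; rewrite lecE /= => /andP [/eqP -> _]. Qed.

Lemma curve_bound (a : nat -> nat -> C) f rho0 : has_ps2 a f rho0 ->
  forall (X Y : R) (p q n K : nat) (S : nat -> nat -> bool),
    (0 < p)%N -> (0 < q)%N ->
    (forall j k, S j k -> (j < K)%N && (k < K)%N) ->
    (forall j k, ~~ S j k -> a j k != 0 -> (n <= p * j + q * k)%N) ->
  exists Kc t0 : R, 0 <= Kc /\ 0 < t0 /\ forall t : R, 0 < t -> t <= t0 ->
    `|f (X * t ^+ p)%:C (Y * t ^+ q)%:C -
      \sum_(j < K) \sum_(k < K) (if S j k then a j k * (X * t ^+ p)%:C ^+ j * (Y * t ^+ q)%:C ^+ k else 0)|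
      <= (Kc * t ^+ n)%:C.
Proof.
move=> Hps X Y p q n K S hp hq hSK hSn.
have [M [rho [hr0 [hr1 [hM H]]]]] := @ps2_tail a f rho0 Hps.
set A' : R := 1 + `|X| + `|Y|.
have hA' : 1 <= A' by rewrite /A' -addrA lerDl addr_ge0.
have hA0 : 0 < A' by apply: lt_le_trans hA'.
set A := A'%:C.
set Kz := 4 * M * (2 * A / rho) ^+ n.
have hKz : 0 <= Kz.
  rewrite /Kz mulr_ge0 ?mulr_ge0 // exprn_ge0 // divr_ge0 ?mulr_ge0 ?ltW //.
  by rewrite /A ltc0R.
exists (complex.Re Kz), (complex.Re rho / (2 * A')).
split; first by rewrite -lec0R -(real_of_ge0 _ hKz).
split.
  by rewrite divr_gt0 ?mulr_gt0 // -ltc0R -(real_of_ge0 _ (ltW hr0)).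
move=> t ht htt.
have -> : (complex.Re Kz * t ^+ n)%:C = Kz * (t%:C) ^+ n.
  by rewrite rmorphM rmorphXn /= -(real_of_ge0 _ hKz).
apply: H.
- by rewrite /A lec1R.
- by rewrite lec0R ltW.
- have e : (2 * A' * t)%:C = 2 * A * t%:C by rewrite !rmorphM /= rmorph_nat.
  rewrite (real_of_ge0 _ (ltW hr0)) -e lecR.
  by move: htt; rewrite ler_pdivlMr ?mulr_gt0 // mulrC.
- exact: hp.
- exact: hq.
- rewrite normC_real -rmorphXn -rmorphM lecR normrM normrX (ger0_norm (ltW ht)).
  apply: ler_wpM2r; rewrite ?exprn_ge0 ?ltW // /A'.
  by have := normr_ge0 Y; have := normr_ge0 X; lra.
- rewrite normC_real -rmorphXn -rmorphM lecR normrM normrX (ger0_norm (ltW ht)).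
  apply: ler_wpM2r; rewrite ?exprn_ge0 ?ltW // /A'.
  by have := normr_ge0 Y; have := normr_ge0 X; lra.
- exact: hSK.
- exact: hSn.
Qed.
End Tail.
Section Oe.
Variable R : realType.

Definition Oe (f : R -> R) (l : R) := exists C t0 : R, 0 <= C /\ 0 < t0 /\
  forall t, 0 < t -> t <= t0 -> `|f t - l| <= C * t.

Lemma Oe_const l : Oe (fun _ => l) l.
Proof. exists 0, 1; split => //; split => // t _ _; by rewrite subrr normr0 mul0r. Qed.

Lemma Oe_add f g l m : Oe f l -> Oe g m -> Oe (fun t => f t + g t) (l + m).
Proof.
move=> [C1 [t1 [hC1 [ht1 H1]]]] [C2 [t2 [hC2 [ht2 H2]]]].
exists (C1 + C2), (Num.min t1 t2); split; first by rewrite addr_ge0.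
split; first by rewrite lt_min ht1 ht2.
move=> t ht; rewrite le_min => /andP [h1 h2].
have := H1 t ht h1; have := H2 t ht h2.
have -> : f t + g t - (l + m) = (f t - l) + (g t - m) by ring.
move=> e2 e1; apply: le_trans (ler_normD _ _) _; rewrite mulrDl; exact: lerD.
Qed.

Lemma Oe_mul f g l m : Oe f l -> Oe g m -> Oe (fun t => f t * g t) (l * m).
Proof.
move=> [C1 [t1 [hC1 [ht1 H1]]]] [C2 [t2 [hC2 [ht2 H2]]]].
exists (C1 * (`|m| + C2 * t2) + `|l| * C2), (Num.min t1 t2); split.
  by rewrite addr_ge0 // mulr_ge0 // addr_ge0 // mulr_ge0 // ltW.
split; first by rewrite lt_min ht1 ht2.
move=> t ht; rewrite le_min => /andP [h1 h2].
have e1 := H1 t ht h1; have e2 := H2 t ht h2.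
have hg : `|g t| <= `|m| + C2 * t2.
  have -> : g t = m + (g t - m) by ring.
  apply: le_trans (ler_normD _ _) _; apply: lerD => //.
  apply: le_trans e2 _; exact: ler_wpM2l.
have -> : f t * g t - l * m = (f t - l) * g t + l * (g t - m) by ring.
apply: le_trans (ler_normD _ _) _; rewrite !normrM.
rewrite mulrDl; apply: lerD.
  rewrite mulrAC; apply: ler_pM => //; exact: normr_ge0.
rewrite -mulrA; apply: ler_wpM2l => //.
Qed.

Lemma Oe_opp f l : Oe f l -> Oe (fun t => - f t) (- l).
Proof.
move=> [C [t0 [hC [ht H]]]]; exists C, t0; split => //; split => // t h1 h2.
by rewrite -opprD normrN; apply: H.
Qed.

Lemma Oe_neg f l : Oe f l -> l < 0 -> forall r, 0 < r ->
  exists t, 0 < t /\ t < r /\ f t < 0.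
Proof.
move=> [C [t0 [hC [ht H]]]] hl r hr.
set t := Num.min (Num.min t0 (r / 2)) (- l / (2 * (C + 1))).
have hC1 : 0 < C + 1 by apply: ltr_wpDl.
have htp : 0 < t.
  rewrite !lt_min ht divr_gt0 //= ?ltr0n // divr_gt0 ?oppr_gt0 // mulr_gt0 //.
have ht0 : t <= t0 by rewrite /t !ge_min lexx.
have htr : t < r.
  apply: le_lt_trans (_ : r / 2 < r); first by rewrite /t !ge_min lexx orbT.
  by rewrite ltr_pdivrMr ?ltr0n // ltr_pMr // ltr1n.
have htl : t <= - l / (2 * (C + 1)) by rewrite /t ge_min lexx orbT.
exists t; split => //; split => //.
have := H t htp ht0.
have hCt : C * t <= - l / 2.
  have e : (C + 1) * (- l / (2 * (C + 1))) = - l / 2.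
    by field; rewrite gt_eqF.
  rewrite -e; apply: le_trans (_ : (C + 1) * t <= _).
    by apply: ler_wpM2r; [exact: ltW | rewrite lerDl].
  by apply: ler_wpM2l => //; exact: ltW.
move/(le_trans (ler_norm _)) => h.
lra.
Qed.
End Oe.
Arguments Oe {R}. Arguments Qf {R}.
Arguments instab {R b c}.

Section H.
Variable R : realType.
Local Notation C := R[i].
Local Notation Re := complex.Re.
Local Notation Im := complex.Im.
Lemma ReD (x y : C) : Re (x + y) = Re x + Re y. Proof. by case: x; case: y. Qed.
Lemma ImD (x y : C) : Im (x + y) = Im x + Im y. Proof. by case: x; case: y. Qed.
Lemma ReN (x : C) : Re (- x) = - Re x. Proof. by case: x. Qed.
Lemma ImN (x : C) : Im (- x) = - Im x. Proof. by case: x. Qed.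
Lemma ReB (x y : C) : Re (x - y) = Re x - Re y. Proof. by rewrite ReD ReN. Qed.
Lemma ImB (x y : C) : Im (x - y) = Im x - Im y. Proof. by rewrite ImD ImN. Qed.
Lemma ReM (x y : C) : Re (x * y) = Re x * Re y - Im x * Im y. Proof. by case: x; case: y. Qed.
Lemma ImM (x y : C) : Im (x * y) = Re x * Im y + Im x * Re y. Proof. by case: x; case: y. Qed.
Lemma ReR (r : R) : Re r%:C = r. Proof. by []. Qed.
Lemma ImR (r : R) : Im r%:C = 0. Proof. by []. Qed.
Lemma Re_nat n : Re (n%:R : C) = n%:R. Proof. by rewrite -(rmorph_nat (real_complex R)). Qed.
Lemma Im_nat n : Im (n%:R : C) = 0. Proof. by rewrite -(rmorph_nat (real_complex R)). Qed.
Lemma Re0 : Re (0 : C) = 0. Proof. by []. Qed.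
Lemma Im0 : Im (0 : C) = 0. Proof. by []. Qed.
Lemma Re1 : Re (1 : C) = 1. Proof. by []. Qed.
Lemma Im1 : Im (1 : C) = 0. Proof. by []. Qed.
Lemma ReNum (x : C) : Num.Theory.Re x = (Re x)%:C.
Proof. by rewrite ReJ_add ReE. Qed.

Lemma normRe (z : C) (e : R) : `|z| <= e%:C -> `|Re z| <= e /\ `|Im z| <= e.
Proof.
rewrite normc_def lecR => h.
have h1 : Re z ^+ 2 <= Re z ^+ 2 + Im z ^+ 2 by rewrite lerDl sqr_ge0.
have h2 : Im z ^+ 2 <= Re z ^+ 2 + Im z ^+ 2 by rewrite lerDr sqr_ge0.
split; apply: le_trans h; rewrite -sqrtr_sqr; exact: ler_wsqrtr.
Qed.


Lemma Oe_from (u v : R -> R) (L Kc K2 t0 : R) (n d : nat) : (d < n)%N -> 0 <= Kc -> 0 <= K2 -> 0 < t0 ->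
  (forall t, 0 < t -> t <= t0 -> `|u t - v t| <= Kc * t ^+ n) ->
  (forall t, 0 < t -> t <= t0 -> `|v t - L * t ^+ d| <= K2 * t ^+ d.+1) ->
  Oe (fun t => u t / t ^+ d) L.
Proof.
move=> hdn hKc hK2 ht0 H1 H2.
exists (Kc + K2), (Num.min t0 1); split; first by rewrite addr_ge0.
split; first by rewrite lt_min ht0 ltr01.
move=> t ht; rewrite le_min => /andP [h1 h2].
have htd : 0 < t ^+ d by rewrite exprn_gt0.
have -> : u t / t ^+ d - L = (u t - L * t ^+ d) / t ^+ d.
  by field; rewrite gt_eqF.
rewrite normrM normfV (gtr0_norm htd) ler_pdivrMr //.
have -> : (Kc + K2) * t * t ^+ d = (Kc + K2) * t ^+ d.+1 by rewrite exprS; ring.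
have -> : u t - L * t ^+ d = (u t - v t) + (v t - L * t ^+ d) by ring.
apply: le_trans (ler_normD _ _) _; rewrite mulrDl; apply: lerD; last exact: H2.
apply: le_trans (H1 t ht h1) _; apply: ler_wpM2l => //.
by apply: ler_wiXn2l => //; apply: ltW.
Qed.

Lemma finish_curve (b c : C -> C -> C) (X Y : R) (p q : nat) : (0 < p)%N -> (0 < q)%N ->
  0 < `|X| + `|Y| ->
  (forall s, 0 < s -> exists t, 0 < t /\ t < s /\
     (Re (b (X * t ^+ p)%:C (Y * t ^+ q)%:C) < 0 \/
      Qf (Re (b (X * t ^+ p)%:C (Y * t ^+ q)%:C)) (Im (b (X * t ^+ p)%:C (Y * t ^+ q)%:C))
         (Re (c (X * t ^+ p)%:C (Y * t ^+ q)%:C)) (Im (c (X * t ^+ p)%:C (Y * t ^+ q)%:C)) < 0)) ->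
  forall r : R, 0 < r ->
    exists eta xi : R, 0 < `|eta| + `|xi| /\ `|eta| + `|xi| < r /\
      exists l : C, Wpoly b c l eta%:C xi%:C = 0 /\ 0 < Num.Theory.Re l.
Proof.
move=> hp hq hXY H r hr.
set A := 1 + `|X| + `|Y|.
have hA : 0 < A by rewrite /A -addrA ltr_wpDr // addr_ge0.
have hs : 0 < Num.min 1 (r / A) by rewrite lt_min; apply/andP; split; [exact: ltr01 | exact: (divr_gt0 hr hA)].
have [t [ht [hts Ht]]] := H _ hs.
move: hts; rewrite lt_min => /andP [ht1 htr].
exists (X * t ^+ p), (Y * t ^+ q).
have hp' : t ^+ p <= t by rewrite -{2}(expr1 t); apply: ler_wiXn2l; rewrite ?ltW.
have hq' : t ^+ q <= t by rewrite -{2}(expr1 t); apply: ler_wiXn2l; rewrite ?ltW.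
have hp0 : 0 < t ^+ p by rewrite exprn_gt0.
have hq0 : 0 < t ^+ q by rewrite exprn_gt0.
rewrite !normrM !normrX !(gtr0_norm ht).
split.
  case: (eqVneq X 0) => hX.
    move: hXY; rewrite hX normr0 add0r => hY.
    by rewrite mul0r add0r mulr_gt0.
  by rewrite ltr_wpDr ?mulr_ge0 ?normr_ge0 ?ltW // mulr_gt0 // normr_gt0 hX.
split.
  move: htr; rewrite ltr_pdivlMr // => htr.
  apply: le_lt_trans htr.
  have hX0 := normr_ge0 X; have hY0 := normr_ge0 Y.
  have e1 : `|X| * t ^+ p <= `|X| * t by apply: ler_wpM2l.
  have e2 : `|Y| * t ^+ q <= `|Y| * t by apply: ler_wpM2l.
  rewrite /A; nra.
have [l [hl1 hl2]] := instab Ht.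
by exists l; split; [exact: hl1 | rewrite ReNum ltc0R].
Qed.
End H.
Arguments finish_curve {R b c X Y p q}.
Arguments Oe_neg {R f l}. Arguments Oe_from {R u v L Kc K2 t0 n d}. Arguments Oe_add {R f g l m}. Arguments Oe_mul {R f g l m}. Arguments Oe_opp {R f l}. Arguments Oe_const {R}. Arguments curve_bound {R a f rho0}. Arguments normRe {R z e}.
Section M.
Variable R : realType.
Local Notation C := R[i].
Local Notation Re := complex.Re.
Local Notation Im := complex.Im.
Variables (b c : C -> C -> C) (bc cc : nat -> nat -> C) (rhob rhoc : C).
Hypothesis Hb : has_ps2 bc b rhob.
Hypothesis Hc : has_ps2 cc c rhoc.
Hypothesis hb00 : bc 0%N 0%N = 0.
Hypothesis hb10 : bc 1%N 0%N = 0.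
Hypothesis hb11 : bc 1%N 1%N = 0.
Hypothesis hc1 : forall j k : nat, (j < 2)%N -> cc j k = 0.
Hypothesis hc30 : cc 3%N 0%N = 0.

Definition Inst := forall r : R, 0 < r ->
    exists eta xi : R, 0 < `|eta| + `|xi| /\ `|eta| + `|xi| < r /\
      exists l : C, Wpoly b c l eta%:C xi%:C = 0 /\ 0 < Num.Theory.Re l.

Lemma from_Oe_Re (X Y : R) (p q d : nat) (g : R -> R) (L : R) :
  (0 < p)%N -> (0 < q)%N -> 0 < `|X| + `|Y| -> Oe g L -> L < 0 ->
  (forall t, 0 < t -> g t = Re (b (X * t ^+ p)%:C (Y * t ^+ q)%:C) / t ^+ d) -> Inst.
Proof.
move=> hp hq hXY hO hL hg; apply: (finish_curve hp hq hXY) => s hs.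
have [t [ht [hts hgt]]] := Oe_neg hO hL _ hs.
exists t; split => //; split => //; left.
by move: hgt; rewrite hg // ltr_pdivrMr ?exprn_gt0 // mul0r.
Qed.

Definition SA (j k : nat) := (j == 0)%N && ((k == 1)%N || (k == 2)%N).

Lemma SA_K j k : SA j k -> (j < 3)%N && (k < 3)%N.
Proof. by rewrite /SA => /andP [/eqP -> /orP [] /eqP ->]. Qed.

Lemma SA_n j k : ~~ SA j k -> bc j k != 0 -> (3 <= 3 * j + 1 * k)%N.
Proof.
rewrite /SA; case: j => [|j] /=; last by move=> _ _; rewrite mulnS leq_addr.
case: k => [|[|[|k]]] //=; by rewrite hb00 eqxx.
Qed.

Lemma sumA (s t : R) : \sum_(j < 3) \sum_(k < 3) (if SA j k then bc j k * (0 * t ^+ 3)%:C ^+ j * (s * t ^+ 1)%:C ^+ k else 0)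
   = bc 0%N 1%N * (s * t)%:C + bc 0%N 2%N * ((s * t) ^+ 2)%:C.
Proof.
rewrite !big_ord_recr !big_ord0 /= /SA /= !add0r !addr0 !expr0 !mulr1 !expr1 rmorphXn.
by [].
Qed.

Lemma ReT (z : C) (r : R) : Re (z * r%:C) = Re z * r.
Proof. by rewrite ReM ReR ImR mulr0 subr0. Qed.
Lemma ImT (z : C) (r : R) : Im (z * r%:C) = Im z * r.
Proof. by rewrite ImM ReR ImR mulr0 add0r mulrC. Qed.

Lemma caseA1 : Re (bc 0%N 1%N) != 0 -> Inst.
Proof.
move=> ha.
set al := Re (bc 0%N 1%N).
set sg : R := if al < 0 then 1 else -1.
have hsg : sg ^+ 2 = 1 by rewrite /sg; case: ifP => _; rewrite ?expr1n ?sqrrN ?expr1n.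
have hL : sg * al < 0.
  rewrite /sg; case: ifP => h; first by rewrite mul1r.
  rewrite mulN1r oppr_lt0 lt_def ha /=.
  by move: h; rewrite real_ltNge ?num_real // => /negbFE.
have [Kc [t0 [hKc [ht0 H]]]] := curve_bound Hb 0 sg 3 1 3 3 SA isT isT SA_K SA_n.
apply: (@from_Oe_Re 0 sg 3 1 1 (fun t => Re (b (0 * t ^+ 3)%:C (sg * t ^+ 1)%:C) / t ^+ 1) (sg * al)) => //.
- by rewrite normr0 add0r /sg; case: ifP => _; rewrite ?normrN normr1.
- apply: (@Oe_from _ (fun t => Re (b (0 * t ^+ 3)%:C (sg * t ^+ 1)%:C)) (fun t => Re (bc 0%N 1%N * (sg * t)%:C + bc 0%N 2%N * ((sg * t) ^+ 2)%:C))
     (sg * al) Kc `|Re (bc 0%N 2%N)| t0 3 1) => //.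
  + move=> t ht htt; have := H t ht htt; rewrite sumA => /normRe [h1 _].
    by rewrite -ReB.
  + move=> t ht htt; rewrite ReD !ReT.
    rewrite /al exprMn hsg mul1r expr1.
    have -> : Re (bc 0%N 1%N) * (sg * t) + Re (bc 0%N 2%N) * t ^+ 2 - sg * Re (bc 0%N 1%N) * t
       = Re (bc 0%N 2%N) * t ^+ 2 by ring.
    by rewrite normrM (ger0_norm (exprn_ge0 _ (ltW ht))).
Qed.

Lemma caseA2 : Re (bc 0%N 1%N) = 0 -> Re (bc 0%N 2%N) < 0 -> Inst.
Proof.
move=> ha hL.
have [Kc [t0 [hKc [ht0 H]]]] := curve_bound Hb 0 1 3 1 3 3 SA isT isT SA_K SA_n.
apply: (@from_Oe_Re 0 1 3 1 2 (fun t => Re (b (0 * t ^+ 3)%:C (1 * t ^+ 1)%:C) / t ^+ 2) (Re (bc 0%N 2%N))) => //.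
- by rewrite normr0 add0r normr1.
- apply: (@Oe_from _ (fun t => Re (b (0 * t ^+ 3)%:C (1 * t ^+ 1)%:C)) (fun t => Re (bc 0%N 1%N * (1 * t)%:C + bc 0%N 2%N * ((1 * t) ^+ 2)%:C))
     (Re (bc 0%N 2%N)) Kc 0 t0 3 2) => //.
  + move=> t ht htt; have := H t ht htt; rewrite sumA => /normRe [h1 _].
    by rewrite -ReB.
  + move=> t ht htt; rewrite ReD !ReT ha !mul1r mul0r add0r subrr normr0 mul0r //.
Qed.

Definition SB (j k : nat) := (j == 2)%N && (k == 0)%N.

Lemma SB_K j k : SB j k -> (j < 3)%N && (k < 3)%N.
Proof. by rewrite /SB => /andP [/eqP -> /eqP ->]. Qed.

Lemma SB_n j k : ~~ SB j k -> bc j k != 0 -> (3 <= 1 * j + 3 * k)%N.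
Proof.
rewrite /SB; case: k => [|k] /=; last by move=> _ _; rewrite mulnS addnCA leq_addr.
case: j => [|[|[|j]]] //=; by rewrite ?hb00 ?hb10 eqxx.
Qed.

Lemma sumB (t : R) : \sum_(j < 3) \sum_(k < 3) (if SB j k then bc j k * (1 * t ^+ 1)%:C ^+ j * (0 * t ^+ 3)%:C ^+ k else 0)
   = bc 2%N 0%N * ((1 * t) ^+ 2)%:C.
Proof.
rewrite !big_ord_recr !big_ord0 /= /SB /= !add0r !addr0 !expr0 !mulr1 !expr1 rmorphXn.
by [].
Qed.

Lemma caseB : Re (bc 2%N 0%N) < 0 -> Inst.
Proof.
move=> hL.
have [Kc [t0 [hKc [ht0 H]]]] := curve_bound Hb 1 0 1 3 3 3 SB isT isT SB_K SB_n.
apply: (@from_Oe_Re 1 0 1 3 2 (fun t => Re (b (1 * t ^+ 1)%:C (0 * t ^+ 3)%:C) / t ^+ 2) (Re (bc 2%N 0%N))) => //.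
- by rewrite normr0 addr0 normr1.
- apply: (@Oe_from _ (fun t => Re (b (1 * t ^+ 1)%:C (0 * t ^+ 3)%:C)) (fun t => Re (bc 2%N 0%N * ((1 * t) ^+ 2)%:C))
     (Re (bc 2%N 0%N)) Kc 0 t0 3 2) => //.
  + move=> t ht htt; have := H t ht htt; rewrite sumB => /normRe [h1 _].
    by rewrite -ReB.
  + move=> t ht htt; rewrite !ReT !mul1r subrr normr0 mul0r //.
Qed.

Definition SCb (j k : nat) := ((j == 0)%N && ((k == 1)%N || (k == 2)%N)) || ((j == 2)%N && (k == 0)%N).
Lemma SCb_K j k : SCb j k -> (j < 3)%N && (k < 3)%N.
Proof. by rewrite /SCb => /orP [/andP [/eqP -> /orP [] /eqP ->] | /andP [/eqP -> /eqP ->]]. Qed.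
Lemma SCb_n j k : ~~ SCb j k -> bc j k != 0 -> (3 <= 1 * j + 1 * k)%N.
Proof.
rewrite /SCb !mul1n; case: j => [|[|[|j]]] /=; case: k => [|[|[|k]]] //=;
  by rewrite ?hb00 ?hb10 ?hb11 eqxx.
Qed.
Definition SCc (j k : nat) := (j == 2)%N && ((k == 0)%N || (k == 1)%N).
Lemma SCc_K j k : SCc j k -> (j < 3)%N && (k < 3)%N.
Proof. by rewrite /SCc => /andP [/eqP -> /orP [] /eqP ->]. Qed.
Lemma SCc_n j k : ~~ SCc j k -> cc j k != 0 -> (4 <= 1 * j + 1 * k)%N.
Proof.
rewrite /SCc !mul1n.
case: (ltnP j 2) => hj; first by rewrite hc1 ?eqxx.
case: j hj => [|[|[|[|j]]]] //= _; case: k => [|[|[|k]]] //=; by rewrite ?hc30 ?eqxx.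
Qed.

Lemma sumCb (mu t : R) : \sum_(j < 3) \sum_(k < 3) (if SCb j k then bc j k * (mu * t ^+ 1)%:C ^+ j * (1 * t ^+ 1)%:C ^+ k else 0)
   = bc 0%N 1%N * (1 * t)%:C + bc 0%N 2%N * ((1 * t) ^+ 2)%:C + bc 2%N 0%N * ((mu * t) ^+ 2)%:C.
Proof.
by rewrite !big_ord_recr !big_ord0 /= /SCb /= !add0r !addr0 !expr0 !mulr1 !expr1 -!rmorphXn.
Qed.
Lemma sumCc (mu t : R) : \sum_(j < 3) \sum_(k < 3) (if SCc j k then cc j k * (mu * t ^+ 1)%:C ^+ j * (1 * t ^+ 1)%:C ^+ k else 0)
   = cc 2%N 0%N * ((mu * t) ^+ 2)%:C + cc 2%N 1%N * ((mu * t) ^+ 2)%:C * (1 * t)%:C.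
Proof.
by rewrite !big_ord_recr !big_ord0 /= /SCc /= !add0r !addr0 !expr0 !mulr1 !expr1 -!rmorphXn.
Qed.

Lemma caseC (m : R) : 0 < m -> Re (bc 0%N 1%N) = 0 -> Im (bc 0%N 2%N) = 0 ->
  Im (bc 2%N 0%N) = 0 -> Im (cc 2%N 0%N) = 0 ->
  (Re (bc 0%N 2%N) + Re (bc 2%N 0%N) * m) * (Re (bc 0%N 2%N) + Re (bc 2%N 0%N) * m) * (Re (cc 2%N 0%N) * m)
  + (Re (bc 0%N 2%N) + Re (bc 2%N 0%N) * m) * Im (bc 0%N 1%N) * (Im (cc 2%N 1%N) * m)
  + - ((Im (cc 2%N 1%N) * m) * (Im (cc 2%N 1%N) * m)) < 0 -> Inst.
Proof.
move=> hm ha hb02 hb20 hc20 hL.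
set mu := Num.sqrt m.
have hmu : mu ^+ 2 = m by rewrite sqr_sqrtr // ltW.
have [Kb [tb [hKb [htb Hbb]]]] := curve_bound Hb mu 1 1 1 3 3 SCb isT isT SCb_K SCb_n.
have [Kc [tc [hKc [htc Hcc]]]] := curve_bound Hc mu 1 1 1 4 3 SCc isT isT SCc_K SCc_n.
have Orb := @Oe_from _ (fun t => Re (b (mu * t ^+ 1)%:C (1 * t ^+ 1)%:C))
   (fun t => Re (bc 0%N 1%N * (1 * t)%:C + bc 0%N 2%N * ((1 * t) ^+ 2)%:C + bc 2%N 0%N * ((mu * t) ^+ 2)%:C))
   (Re (bc 0%N 2%N) + Re (bc 2%N 0%N) * m) Kb 0 tb 3 2 isT hKb (lexx 0) htb.
have Orb' : Oe (fun t => Re (b (mu * t ^+ 1)%:C (1 * t ^+ 1)%:C) / t ^+ 2) (Re (bc 0%N 2%N) + Re (bc 2%N 0%N) * m).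
  apply: Orb.
  + move=> t ht htt; have := Hbb t ht htt; rewrite sumCb => /normRe [h1 _].
    by rewrite -ReB.
  + move=> t ht htt; rewrite !ReD !ReT ha.
    rewrite [X in `|X|](_ : _ = 0); first by rewrite normr0 mul0r.
    rewrite !exprMn hmu; ring.
have Oib : Oe (fun t => Im (b (mu * t ^+ 1)%:C (1 * t ^+ 1)%:C) / t ^+ 1) (Im (bc 0%N 1%N)).
  apply: (@Oe_from _ (fun t => Im (b (mu * t ^+ 1)%:C (1 * t ^+ 1)%:C))
   (fun t => Im (bc 0%N 1%N * (1 * t)%:C + bc 0%N 2%N * ((1 * t) ^+ 2)%:C + bc 2%N 0%N * ((mu * t) ^+ 2)%:C))
   (Im (bc 0%N 1%N)) Kb 0 tb 3 1) => //.
  + move=> t ht htt; have := Hbb t ht htt; rewrite sumCb => /normRe [_ h1].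
    by rewrite -ImB.
  + move=> t ht htt; rewrite !ImD !ImT hb02 hb20.
    rewrite [X in `|X|](_ : _ = 0); first by rewrite normr0 mul0r.
    ring.
have Orc : Oe (fun t => Re (c (mu * t ^+ 1)%:C (1 * t ^+ 1)%:C) / t ^+ 2) (Re (cc 2%N 0%N) * m).
  apply: (@Oe_from _ (fun t => Re (c (mu * t ^+ 1)%:C (1 * t ^+ 1)%:C))
   (fun t => Re (cc 2%N 0%N * ((mu * t) ^+ 2)%:C + cc 2%N 1%N * ((mu * t) ^+ 2)%:C * (1 * t)%:C))
   (Re (cc 2%N 0%N) * m) Kc (`|Re (cc 2%N 1%N)| * m) tc 4 2) => //.
  + by rewrite mulr_ge0 // ltW.
  + move=> t ht htt; have := Hcc t ht htt; rewrite sumCc => /normRe [h1 _].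
    by rewrite -ReB.
  + move=> t ht htt; rewrite !ReD !ReT.
    rewrite [X in `|X|](_ : _ = Re (cc 2%N 1%N) * m * t ^+ 3); last first.
      by rewrite !exprMn hmu !exprS expr0; ring.
    by rewrite !normrM (ger0_norm (ltW hm)) (ger0_norm (ltW ht)) !exprS expr0 mulr1.
have Oic : Oe (fun t => Im (c (mu * t ^+ 1)%:C (1 * t ^+ 1)%:C) / t ^+ 3) (Im (cc 2%N 1%N) * m).
  apply: (@Oe_from _ (fun t => Im (c (mu * t ^+ 1)%:C (1 * t ^+ 1)%:C))
   (fun t => Im (cc 2%N 0%N * ((mu * t) ^+ 2)%:C + cc 2%N 1%N * ((mu * t) ^+ 2)%:C * (1 * t)%:C))
   (Im (cc 2%N 1%N) * m) Kc 0 tc 4 3) => //.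
  + move=> t ht htt; have := Hcc t ht htt; rewrite sumCc => /normRe [_ h1].
    by rewrite -ImB.
  + move=> t ht htt; rewrite !ImD !ImT hc20.
    rewrite [X in `|X|](_ : _ = 0); first by rewrite normr0 mul0r.
    by rewrite !exprMn hmu !exprS expr0; ring.
have OG := Oe_add (Oe_add (Oe_mul (Oe_mul Orb' Orb') Orc) (Oe_mul (Oe_mul Orb' Oib) Oic)) (Oe_opp (Oe_mul Oic Oic)).
apply: (@finish_curve _ b c mu 1 1 1) => // [|s hs].
  by rewrite normr1 ltr_wpDl.
have [t [ht [hts hG]]] := Oe_neg OG hL _ hs.
exists t; split => //; split => //; right.
move: hG => /=.
set rb := Re (b _ _); set ib := Im (b _ _); set rc := Re (c _ _); set ic := Im (c _ _).
have -> : Qf rb ib rc ic = t ^+ 6 * (rb / t ^+ 2 * (rb / t ^+ 2) * (rc / t ^+ 2) +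
     rb / t ^+ 2 * (ib / t ^+ 1) * (ic / t ^+ 3) + - (ic / t ^+ 3 * (ic / t ^+ 3))).
  rewrite /Qf; field; by rewrite gt_eqF.
by rewrite pmulr_rlt0 // exprn_gt0.
Qed.
End M.

Section Parts.
Variable R : realType.
Local Notation C := R[i].
Local Notation Re := complex.Re.
Local Notation Im := complex.Im.
Variables (b01 b02 b20 c20 c21 : C).
Hypotheses (ha : Re b01 = 0) (h02 : Im b02 = 0) (h20 : Im b20 = 0) (hc : Im c20 = 0).

Ltac reim := rewrite ?expr2 !(ReD, ImD, ReB, ImB, ReM, ImM, ReN, ImN, Re_nat, Im_nat) ?ha ?h02 ?h20 ?hc.

Lemma i4_parts : Re (ind4 b01 b02 b20 c20 c21) = Im b01 * Re b20 * Im c21 + 2 * Re b02 * Re b20 * Re c20 + Re c21 ^+ 2 - Im c21 ^+ 2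
  /\ Im (ind4 b01 b02 b20 c20 c21) = Re c21 * (2 * Im c21 - Im b01 * Re b20).
Proof. rewrite /ind4; split; reim; ring. Qed.

Lemma i5_parts : Re (ind5 b01 b02 b20 c20 c21) = Im b01 * Im c21 + Re b02 * Re c20
  /\ Im (ind5 b01 b02 b20 c20 c21) = - Im b01 * Re c21.
Proof. rewrite /ind5; split; reim; ring. Qed.

Lemma i3_parts : Re c21 = 0 -> Re (ind3 b01 b02 b20 c20 c21) =
   (Im b01 * Re b20 * Im c21 + 2 * Re b02 * Re b20 * Re c20 - Im c21 ^+ 2) ^+ 2
   - 4 * Re c20 * Re b20 ^+ 2 * Re b02 * (Im b01 * Im c21 + Re b02 * Re c20).
Proof. move=> hu; rewrite /ind3; reim; rewrite hu; ring. Qed.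
End Parts.

Section Choose.
Variable R : realType.
Lemma choose_m (p2 q2 c2 be de : R) : 0 < p2 -> 0 < q2 -> 0 < c2 ->
  (be * de + p2 * c2 < 0 \/
   (be * q2 * de + 2 * p2 * q2 * c2 - de ^+ 2 <= 0 /\
    0 < (be * q2 * de + 2 * p2 * q2 * c2 - de ^+ 2) ^+ 2 - 4 * c2 * q2 ^+ 2 * p2 * (be * de + p2 * c2))) ->
  exists m : R, 0 < m /\
   (p2 + q2 * m) * (p2 + q2 * m) * (c2 * m) + (p2 + q2 * m) * be * (de * m) + - ((de * m) * (de * m)) < 0.
Proof.
move=> hp hq hc H.
set I4 := be * q2 * de + 2 * p2 * q2 * c2 - de ^+ 2.
set I5 := be * de + p2 * c2.
set a2 := c2 * q2 ^+ 2.
have ha2 : 0 < a2 by rewrite /a2 mulr_gt0 // exprn_gt0.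
have eL : forall m, (p2 + q2 * m) * (p2 + q2 * m) * (c2 * m) + (p2 + q2 * m) * be * (de * m) + - ((de * m) * (de * m))
   = m * (a2 * m ^+ 2 + I4 * m + p2 * I5).
  by move=> m; rewrite /a2 /I4 /I5; ring.
have hpos : forall m, 0 < m -> a2 * m ^+ 2 + I4 * m + p2 * I5 < 0 ->
  exists m : R, 0 < m /\
   (p2 + q2 * m) * (p2 + q2 * m) * (c2 * m) + (p2 + q2 * m) * be * (de * m) + - ((de * m) * (de * m)) < 0.
  move=> m hm hF; exists m; split => //; rewrite eL.
  by rewrite pmulr_rlt0.
case: (ltrP I5 0) => h5.
  set N0 := - (p2 * I5).
  have hN0 : 0 < N0 by rewrite /N0 oppr_gt0 pmulr_rlt0.
  set D := a2 + I4 ^+ 2 + 1 + N0.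
  have hD : 0 < D.
    rewrite /D; have := sqr_ge0 I4; lra.
  set m := N0 / (2 * D).
  have hm : 0 < m by rewrite /m divr_gt0 // mulr_gt0.
  have hmD : 2 * D * m = N0 by rewrite /m mulrC divfK // mulf_neq0 // gt_eqF.
  have hm1 : m <= 1.
    have : N0 <= 2 * D by rewrite /D; have := sqr_ge0 I4; lra.
    move: hmD hD; nra.
  apply: (hpos m hm).
  have h1 : a2 * m ^+ 2 <= a2 * m by have := mulr_gt0 ha2 hm; rewrite expr2; nra.
  have hI : I4 <= I4 ^+ 2 + 1 by have := sqr_ge0 (I4 - 1); rewrite !expr2; nra.
  have h2 : I4 * m <= (I4 ^+ 2 + 1) * m by apply: ler_wpM2r => //; exact: ltW.
  have : D * m = N0 / 2 by rewrite -hmD; field.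
  rewrite /D /N0 => hDm.
  move: h1 h2 hDm hN0; rewrite /N0; nra.
case: H => [h|[h4 h3]]; first by move: h5; rewrite leNgt h.
have hI4 : I4 < 0.
  rewrite lt_def h4 andbT; apply/eqP => e.
  move: h3; rewrite (_ : be * q2 * de + 2 * p2 * q2 * c2 - de ^+ 2 = 0); last by rewrite e.
  rewrite expr0n /= sub0r oppr_gt0 => h3.
  have : 0 <= 4 * c2 * q2 ^+ 2 * p2 * (be * de + p2 * c2).
    by apply: mulr_ge0 => //; rewrite !mulr_ge0 ?ltW // exprn_ge0 // ltW.
  lra.
set m := - I4 / (2 * a2).
have hm : 0 < m by rewrite /m divr_gt0 ?oppr_gt0 // mulr_gt0.
apply: (hpos m hm).
have e : (a2 * m ^+ 2 + I4 * m + p2 * I5) * (4 * a2) = - (I4 ^+ 2 - 4 * c2 * q2 ^+ 2 * p2 * I5).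
  rewrite /m /a2; field; by rewrite !gt_eqF.
have h4a : 0 < 4 * a2 by rewrite mulr_gt0.
rewrite -(pmulr_rlt0 _ h4a) mulrC e oppr_lt0.
exact: h3.
Qed.
End Choose.
Theorem mainTheorem14 (R : realType)
  (E : R[i] -> R[i] -> R[i] -> R[i]) (a : nat -> nat -> nat -> R[i]) (rhoE : R[i])
  (h : R[i] -> R[i] -> R[i] -> R[i]) (ah : nat -> nat -> nat -> R[i]) (rhoh : R[i])
  (b c : R[i] -> R[i] -> R[i]) (bc cc : nat -> nat -> R[i]) (rhob rhoc rho : R[i]) :
  (* E analytic near 0 in C^3 with Taylor coefficients a *)
  has_ps3 a E rhoE ->
  (* a_(i,j,k) in (sqrt -1)^(j+k) R *)
  (forall i j k : nat, exists t : R, a i j k = t%:C * iC R ^+ (j + k)) ->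
  (* E(lambda,-eta,xi) = E(lambda,eta,xi) near 0 *)
  (forall l eta xi : R[i], `|l| < rhoE -> `|eta| < rhoE -> `|xi| < rhoE ->
     E l (- eta) xi = E l eta xi) ->
  (* E(0,0,xi) = 0 near 0 *)
  (forall xi : R[i], `|xi| < rhoE -> E 0 0 xi = 0) ->
  a 1%N 0%N 0%N = 0 -> a 2%N 0%N 0%N != 0 -> a 0%N 2%N 0%N != 0 ->
  (* Weierstrass factorization E = W h near the origin, h(0,0,0) <> 0 *)
  has_ps3 ah h rhoh -> h 0 0 0 != 0 ->
  has_ps2 bc b rhob -> has_ps2 cc c rhoc ->
  0 < rho ->
  (forall l eta xi : R[i], `|l| < rho -> `|eta| < rho -> `|xi| < rho ->
     E l eta xi = Wpoly b c l eta xi * h l eta xi) ->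
  (* b = b01 xi + b02 xi^2 + b20 eta^2 + O(|eta|+|xi|)^3
     (coefficient bc j k is that of eta^j xi^k) *)
  bc 0%N 0%N = 0 -> bc 1%N 0%N = 0 -> bc 1%N 1%N = 0 ->
  (* c = eta^2 (c20 + c21 xi + O(|eta|+|xi|)^2) *)
  (forall j k : nat, (j < 2)%N -> cc j k = 0) -> cc 3%N 0%N = 0 ->
  (* c20 > 0 *)
  0 < cc 2%N 0%N ->
  let b01 := bc 0%N 1%N in let b02 := bc 0%N 2%N in let b20 := bc 2%N 0%N in
  let c20 := cc 2%N 0%N in let c21 := cc 2%N 1%N in
  let i1 := ind1 b01 b02 b20 c20 c21 in
  let i2 := ind2 b01 b02 b20 c20 c21 in
  let i3 := ind3 b01 b02 b20 c20 c21 in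
  let i4 := ind4 b01 b02 b20 c20 c21 in
  let i5 := ind5 b01 b02 b20 c20 c21 in
  ((i1 < 0 \/ i2 < 0) \/
   (0 < i1 /\ 0 < i2 /\ 0 < i3 /\ i4 <= 0) \/
   (0 < i1 /\ 0 < i2 /\ 0 < i3 /\ i5 < 0)) ->
  forall r : R, 0 < r ->
    exists eta xi : R, 0 < `|eta| + `|xi| /\ `|eta| + `|xi| < r /\
      exists l : R[i], Wpoly b c l eta%:C xi%:C = 0 /\ 0 < Re l.
Proof.
move=> _ _ _ _ _ _ _ _ _ Hb Hc _ _ hb00 hb10 hb11 hc1 hc30 hc20.
move=> b01 b02 b20 c20 c21 i1 i2 i3 i4 i5 Hcase.
change (Inst R b c).
move: hc20; rewrite ltcE /= => /andP [/eqP hc20i hc20r].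
case: (eqVneq (complex.Re (bc 0%N 1%N)) 0) => ha; last exact: (@caseA1 R b c bc rhob Hb hb00 ha).
case: Hcase => [[h1|h2]|[[h1 [h2 [h3 h4]]]|[h1 [h2 [h3 h5]]]]].
- move: h1; rewrite /i1 /ind1 ltcE /= => /andP [_ hneg].
  exact: (@caseA2 R b c bc rhob Hb hb00 ha hneg).
- move: h2; rewrite /i2 /ind2 ltcE /= => /andP [_ hneg].
  exact: (@caseB R b c bc rhob Hb hb00 hb10 hneg).
- move: h1; rewrite /i1 /ind1 ltcE /= => /andP [/eqP h02 hp2].
  move: h2; rewrite /i2 /ind2 ltcE /= => /andP [/eqP h20 hq2].
  have [r4 m4] := @i4_parts R b01 b02 b20 c20 c21 ha h02 h20 hc20i.
  move: h4; rewrite /i4 lecE /= => /andP [/eqP e4 h4].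
  rewrite m4 in e4; rewrite r4 in h4.
  have hP : 0 < complex.Re b02 * complex.Re b20 * complex.Re c20 by rewrite !mulr_gt0.
  have hu : complex.Re c21 = 0.
    case: (eqVneq (complex.Re c21) 0) => hu //; exfalso.
    have e : 2 * complex.Im c21 - complex.Im b01 * complex.Re b20 = 0.
      by apply: (mulfI hu); rewrite mulr0 e4.
    have e' : complex.Im b01 * complex.Re b20 = 2 * complex.Im c21 by lra.
    rewrite e' in h4.
    have : 0 < complex.Re c21 ^+ 2 by rewrite lt_def sqr_ge0 andbT expf_neq0.
    have := sqr_ge0 (complex.Im c21).
    rewrite !expr2 in h4 *; nra.
  move: h3; rewrite /i3 ltcE /= => /andP [_ h3].
  rewrite (@i3_parts R b01 b02 b20 c20 c21 ha h02 h20 hc20i hu) in h3.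
  have h4' : complex.Im b01 * complex.Re b20 * complex.Im c21 + 2 * complex.Re b02 * complex.Re b20 * complex.Re c20
     - complex.Im c21 ^+ 2 <= 0 by move: h4; rewrite hu expr0n addr0.
  have [m [hm hL]] := @choose_m R _ _ _ (complex.Im b01) (complex.Im c21) hp2 hq2 hc20r (or_intror (conj h4' h3)).
  exact: (@caseC R b c bc cc rhob rhoc Hb Hc hb00 hb10 hb11 hc1 hc30 m hm ha h02 h20 hc20i hL).
- move: h1; rewrite /i1 /ind1 ltcE /= => /andP [/eqP h02 hp2].
  move: h2; rewrite /i2 /ind2 ltcE /= => /andP [/eqP h20 hq2].
  have [r5 m5] := @i5_parts R b01 b02 b20 c20 c21 ha h02 hc20i.
  move: h5; rewrite /i5 ltcE /= => /andP [/eqP e5 h5].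
  rewrite m5 in e5; rewrite r5 in h5.
  have hu : complex.Re c21 = 0.
    case: (eqVneq (complex.Im b01) 0) => hb.
      exfalso; move: h5; rewrite hb mul0r add0r => h5.
      have : 0 < complex.Re b02 * complex.Re c20 by rewrite mulr_gt0.
      lra.
    have : - complex.Im b01 != 0 by rewrite oppr_eq0.
    move=> hb'; apply: (mulfI hb'); by rewrite mulr0.
  have [m [hm hL]] := @choose_m R _ _ _ (complex.Im b01) (complex.Im c21) hp2 hq2 hc20r (or_introl h5).
  exact: (@caseC R b c bc cc rhob rhoc Hb Hc hb00 hb10 hb11 hc1 hc30 m hm ha h02 h20 hc20i hL).
Qed.
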